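(* Let $n\in\mathbb N$ and let $\xi_n:S^1\to M_n(\mathbb C)$ be given by $\xi_n(z)_{ij}=z^{j-i}$ ($1\le i,j\le n$). Then $\xi_n$ is pure in the convex cone $\left(C(S^1)^{(n)}\otimes_{\min}C(S^1)_{(n)}\right)_+$: whenever $\xi_n=y+w$ with $y,w$ in this cone, there is $\lambda\in[0,1]$ with $w=\lambda\xi_n$ and $y=(1-\lambda)\xi_n$.
   Context: $C(S^1)^{(n)}\subseteq M_n(\mathbb C)$ is the space of Toeplitz matrices $[\tau_{k-\ell}]$. $C(S^1)_{(n)}$ is the space of continuous functions $f$ on the unit circle $S^1$ with Fourier coefficients $\hat f(k)=0$ for $|k|\ge n$. $C(S^1)^{(n)}\otimes_{\min}C(S^1)_{(n)}$ is identified with the space of continuous functions $F:S^1\to C(S^1)^{(n)}$ whose entries lie in $C(S^1)_{(n)}$ (with $t\otimes f\leftrightarrow z\mapsto f(z)t$), and its positive cone consists of those $F$ with $F(z)$ positive semidefinite for all $z\in S^1$. Note $\xi_n=\sum_{k=-n+1}^{n-1} r_k\otimes z^{-k}$, where $r_k=s^k$ for $k\ge0$, $r_k=(s^* )^{-k}$ for $k<0$, $s$ the lower-triangular shift matrix. *)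

(* Defs.v *)
From HB Require Import structures.
From mathcomp Require Import all_boot all_order all_algebra.
From mathcomp Require Import complex.
From mathcomp Require Import reals.
Set Implicit Arguments. Unset Strict Implicit. Unset Printing Implicit Defensive.
Import Order.TTheory GRing.Theory Num.Theory.
Local Open Scope ring_scope.
Local Open Scope complex_scope.

Definition on_circle (R : realType) (z : R[i]) : Prop := `|z| = 1.

(* C(S^1)_(n): continuous functions on S^1 whose Fourier coefficients vanish
   for |k| >= n, i.e. trigonometric polynomials z |-> sum_{|k|<n} c_k z^k
   (restricted to S^1). *)
Definition trigpoly_deg_lt (R : realType) (n : nat) (f : R[i] -> R[i]) : Prop :=
  exists c : 'I_(2 * n).-1 -> R[i],
    forall z : R[i], on_circle z ->
      f z = \sum_(k < (2 * n).-1) c k * z ^ (k%:Z - (n%:Z - 1)).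

Definition toeplitz (C : Type) (n : nat) (M : 'M[C]_n) : Prop :=
  forall i j i' j' : 'I_n, (i%:Z - j%:Z = i'%:Z - j'%:Z)%R -> M i j = M i' j'.

Definition psd (R : realType) (n : nat) (M : 'M[R[i]]_n) : Prop :=
  forall v : 'cV[R[i]]_n,
    0 <= ((map_mx Num.conj v)^T *m M *m v) ord0 ord0.

(* Positive cone of C(S^1)^(n) (x)_min C(S^1)_(n), viewed as functions
   F : S^1 -> C(S^1)^(n) with entries in C(S^1)_(n) and F(z) >= 0 on S^1. *)
Definition tensor_cone (R : realType) (n : nat) (F : R[i] -> 'M[R[i]]_n) : Prop :=
  [/\ forall z, on_circle z -> toeplitz (F z),
      forall i j : 'I_n, trigpoly_deg_lt n (fun z => F z i j)
    & forall z, on_circle z -> psd (F z)].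

Definition xi (R : realType) (n : nat) (z : R[i]) : 'M[R[i]]_n :=
  \matrix_(i < n, j < n) z ^ (j%:Z - i%:Z).

(* Main.v *)
Require Import Defs.
From HB Require Import structures.
From mathcomp Require Import all_boot all_order all_algebra.
From mathcomp Require Import complex.
From mathcomp Require Import reals.
From mathcomp Require Import ring zify.
Set Implicit Arguments. Unset Strict Implicit. Unset Printing Implicit Defensive.
Import Order.TTheory GRing.Theory Num.Theory.
Local Open Scope ring_scope.
Section Gen.
Variable C : numClosedFieldType.

Lemma scalar0 (p q r : C) : 0 <= r ->
  (forall t : C, 0 <= t * p + t^* * q + t^* * t * r) -> p = 0 /\ q = 0.
Proof.
move=> r0 H.
have rR : r \is Num.real by apply: ger0_real.
have rc : r^* = r by apply/eqP; rewrite -CrealE.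
have h1 := H 1; rewrite rmorph1 !mul1r in h1.
have hi := H 'i; rewrite conjCi in hi.
have r1 : p + q \is Num.real.
  have -> : p + q = (p + q + r) - r by ring.
  by rewrite rpredB // ger0_real.
have r2 : 'i * (p - q) \is Num.real.
  have -> : 'i * (p - q) = ('i * p + - 'i * q + - 'i * 'i * r) - r.
    have : - 'i * 'i * r = r.
      by rewrite mulNr -expr2 sqrCi opprK mul1r.
    move=> ->; ring.
  by rewrite rpredB // ger0_real.
move: r1 r2; rewrite !CrealE => /eqP e1 /eqP e2.
rewrite rmorphD /= in e1; rewrite rmorphM rmorphB /= conjCi in e2.
have iN0 : ('i : C) != 0 by rewrite neq0Ci.
have e3 : q^* - p^* = p - q.
  apply: (mulfI iN0). rewrite -e2; ring.
have E : q^* *+ 2 = p *+ 2.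
  transitivity ((p^* + q^*) + (q^* - p^*)); first by ring.
  rewrite e1 e3; ring.
have qp : q^* = p.
  apply: (mulIf (x := 2%:R)); first by rewrite pnatr_eq0.
  by rewrite !mulr_natr.
have qE : q = p^* by rewrite -qp conjCK.
subst q.
set s := (1 + r)^-1.
have r1 : 1 + r != 0 by rewrite gt_eqF // ltr_pwDl.
have sc : s^* = s.
  rewrite /s fmorphV rmorphD rmorph1.
  by congr ((1 + _)^-1); exact: rc.
have := H (- (s * p^*)).
rewrite rmorphN rmorphM /= conjCK sc.
have -> : - (s * p^*) * p + - (s * p) * p^* + - (s * p) * - (s * p^*) * r
   = - ((p * p^*) * (s * s) * (r + 2%:R)).
  rewrite /s; field. done.
rewrite oppr_ge0 => Hle.
have Hge : 0 <= (p * p^*) * (s * s) * (r + 2%:R).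
  have s0 : 0 <= s by rewrite /s invr_ge0 addr_ge0.
  apply: mulr_ge0; last by rewrite addr_ge0 // ler0n.
  by apply: mulr_ge0; [exact: mul_conjC_ge0 | exact: mulr_ge0].
have : (p * p^*) * (s * s) * (r + 2%:R) == 0 by rewrite eq_le Hle Hge.
rewrite mulf_eq0 => /orP[|].
  rewrite mulf_eq0 => /orP[|].
    by rewrite mul_conjC_eq0 => /eqP ->; rewrite rmorph0.
  by rewrite mulf_eq0 orbb /s invr_eq0 (negbTE r1).
- rewrite gt_eqF //. apply: (@lt_le_trans _ _ 2%:R); first by rewrite ltr0n.
  by rewrite lerDr.
Qed.

Variable n : nat.
Definition Q (A : 'M[C]_n) (x y : 'cV[C]_n) : C :=
  ((map_mx Num.conj x)^T *m A *m y) ord0 ord0.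

Lemma QDl A x1 x2 y : Q A (x1 + x2) y = Q A x1 y + Q A x2 y.
Proof. by rewrite /Q map_mxD linearD /= !mulmxDl mxE. Qed.
Lemma QDr A x y1 y2 : Q A x (y1 + y2) = Q A x y1 + Q A x y2.
Proof. by rewrite /Q !mulmxDr mxE. Qed.
Lemma QZl A a x y : Q A (a *: x) y = a^* * Q A x y.
Proof. by rewrite /Q map_mxZ linearZ /= -!scalemxAl mxE. Qed.
Lemma QZr A a x y : Q A x (a *: y) = a * Q A x y.
Proof. by rewrite /Q -!scalemxAr mxE. Qed.
Lemma QNl A x y : Q A (- x) y = - Q A x y.
Proof. by rewrite -scaleN1r QZl rmorphN1 mulN1r. Qed.
Lemma QNr A x y : Q A x (- y) = - Q A x y.
Proof. by rewrite -scaleN1r QZr mulN1r. Qed.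
Lemma QDm A B x y : Q (A + B) x y = Q A x y + Q B x y.
Proof. by rewrite /Q mulmxDr mulmxDl mxE. Qed.
Lemma Qdelta A i j : Q A (delta_mx i ord0) (delta_mx j ord0) = A i j.
Proof.
rewrite /Q.
have -> : map_mx Num.conj (delta_mx i ord0 : 'cV[C]_n) = delta_mx i ord0.
  by apply/matrixP=> a b; rewrite !mxE rmorph_nat.
rewrite trmx_delta mxE (bigD1 j) //= big1 ?addr0.
  rewrite !mxE eqxx mulr1n mulr1 (bigD1 i) //= big1 ?addr0.
    by rewrite !mxE !eqxx mulr1n mul1r.
  by move=> k /negbTE ki; rewrite !mxE ki andbF mulr0n mul0r.
by move=> k /negbTE kj; rewrite !mxE kj mulr0n mulr0.
Qed.

Definition psdQ (A : 'M[C]_n) := forall u, 0 <= Q A u u.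

Lemma psd_null A v x : psdQ A -> Q A v v = 0 -> Q A v x = 0 /\ Q A x v = 0.
Proof.
move=> HA Hv; apply: scalar0 (HA x) _ => t.
have := HA (v + t *: x).
rewrite !QDl !QDr !QZl !QZr Hv.
by have -> : 0 + t * Q A v x + (t^* * Q A x v + t^* * (t * Q A x x)) =
  t * Q A v x + t^* * Q A x v + t^* * t * Q A x x by ring.
Qed.
End Gen.
Section Main.
Variable R : realType.
Local Notation C := (R[i]).

Lemma conj_circle (z : C) : `|z| = 1 -> z^* = z^-1.
Proof. by move=> h; rewrite invC_norm h expr1n invr1 mul1r. Qed.

Lemma circle_neq0 (z : C) : `|z| = 1 -> z != 0.
Proof. by move=> h; apply/eqP=> z0; move: h; rewrite z0 normr0 => /eqP; rewrite eq_sym oner_eq0. Qed.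

Lemma rank1 (N : nat) (z : C) (A B : 'M[C]_N.+1) : `|z| = 1 ->
  psdQ A -> psdQ B -> xi N.+1 z = A + B -> A = A ord0 ord0 *: xi N.+1 z.
Proof.
move=> hz pA pB hxi.
have z0 := circle_neq0 hz.
have zc := conj_circle hz.
pose e (k : 'I_N.+1) : 'cV[C]_N.+1 := delta_mx k ord0.
have key : forall j : 'I_N.+1, (forall k, A k j = z ^+ j * A k ord0) /\
                                 (forall k, A j k = (z ^+ j)^-1 * A ord0 k).
  move=> j.
  set w := z ^+ j.
  have w0 : w != 0 by rewrite expf_neq0.
  have wc : w^* = w^-1 by rewrite /w rmorphXn /= zc exprVn.
  pose v := w *: e ord0 - e j.
  have Qexp : forall M x, Q M x v = w * Q M x (e ord0) - Q M x (e j).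
    by move=> M x; rewrite /v QDr QNr QZr.
  have Qexp2 : forall M x, Q M v x = w^* * Q M (e ord0) x - Q M (e j) x.
    by move=> M x; rewrite /v QDl QNl QZl.
  have Hxi : Q (xi N.+1 z) v v = 0.
    rewrite Qexp !Qexp2 !Qdelta !mxE /= subrr expr0z subr0 sub0r -exprnN -/w wc.
    rewrite subrr expr0z -exprnP -/w; field; exact: w0.
  have HA : Q A v v = 0.
    move: Hxi; rewrite hxi QDm => /eqP; rewrite paddr_eq0 ?pA ?pB //.
    by case/andP=> /eqP.
  have [H1 H2] := @psd_null _ _ A v (e ord0) pA HA.
  split=> k.
    have [_ H] := @psd_null _ _ A v (e k) pA HA.
    by move: H; rewrite Qexp !Qdelta => /eqP; rewrite subr_eq0 => /eqP <-.
  have [H _] := @psd_null _ _ A v (e k) pA HA.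
  by move: H; rewrite Qexp2 !Qdelta wc => /eqP; rewrite subr_eq0 => /eqP <-.
apply/matrixP=> j k; rewrite !mxE.
have [_ h1] := key j; have [h2 _] := key k.
rewrite h1 h2 mulrA mulrC; congr (_ * _).
by rewrite (expfzDr _ _ z0) -exprnN mulrC.
Qed.

Definition cpt (k : nat) : C := (1 + k%:R * 'i) / (1 - k%:R * 'i).

Lemma cpt_den (k : nat) : (1 - k%:R * 'i : C) != 0.
Proof.
apply/negP=> /eqP h.
have : (1 - k%:R * 'i) * (1 + k%:R * 'i) = (1 + (k ^ 2)%:R : C).
  rewrite natrX; have := sqrCi C; move=> hi.
  transitivity (1 - k%:R ^+ 2 * 'i ^+ 2 : C); first by ring.
  by rewrite hi mulrN1 opprK.
rewrite h mul0r => /eqP; rewrite eq_sym gt_eqF // ltr_pwDl // ler0n.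
Qed.

Lemma cpt_circle k : `|cpt k| = 1.
Proof.
have e : (1 + k%:R * 'i : C)^* = 1 - k%:R * 'i.
  by rewrite rmorphD rmorph1 rmorphM rmorph_nat /= conjCi mulrN.
rewrite /cpt normf_div -e norm_conjC divff // normr_eq0.
by rewrite -conjC_eq0 e cpt_den.
Qed.

Lemma cpt_inj : injective cpt.
Proof.
move=> a b; rewrite /cpt => /eqP; rewrite eqr_div ?cpt_den // => /eqP h.
have : (a%:R - b%:R) * ('i *+ 2) = (1 + a%:R * 'i) * (1 - b%:R * 'i) - (1 + b%:R * 'i) * (1 - a%:R * 'i) :> C.
  by ring.
rewrite h subrr => /eqP; rewrite mulf_eq0 mulrn_eq0 /= (negbTE (neq0Ci C)) orbF subr_eq0 eqr_nat.
by move/eqP.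
Qed.

Lemma poly_circle0 (P : {poly C}) : (forall z, `|z| = 1 -> P.[z] = 0) -> P = 0.
Proof.
move=> H; have [//|nz] := eqVneq P 0; exfalso.
have hall : all (root P) [seq cpt k | k <- iota 0 (size P)].
  by apply/allP => x /mapP [k _ ->]; rewrite /root H // cpt_circle.
have hu : uniq [seq cpt k | k <- iota 0 (size P)].
  by rewrite map_inj_uniq ?iota_uniq //; exact: cpt_inj.
by have := max_poly_roots nz hall hu; rewrite size_map size_iota ltnn.
Qed.

Definition PP (M : nat) (a : 'I_M -> C) : {poly C} := \sum_(k < M) a k *: 'X^k.

Lemma PP_coef M (a : 'I_M -> C) (k : 'I_M) : (PP a)`_k = a k.
Proof.
rewrite /PP coef_sum (bigD1 k) //= big1 ?addr0.
  by rewrite coefZ coefXn eqxx mulr1.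
by move=> l lk; rewrite coefZ coefXn (_ : (_ == _) = false) ?mulr0 //; apply/negbTE; rewrite eq_sym; exact: lk.
Qed.

Lemma PP_coef0 M (a : 'I_M -> C) m : (M <= m)%N -> (PP a)`_m = 0.
Proof.
move=> hm; rewrite /PP coef_sum big1 // => l _.
rewrite coefZ coefXn.
have -> : (m == l) = false by apply/negbTE; rewrite neq_ltn (leq_trans (ltn_ord l) hm) orbT.
by rewrite mulr0.
Qed.

Lemma PP_eval (N : nat) (a : 'I_(2 * N.+1).-1 -> C) (z : C) : z != 0 ->
  z ^+ N * (\sum_(k < (2 * N.+1).-1) a k * z ^ (k%:Z - (N.+1%:Z - 1))) = (PP a).[z].
Proof.
move=> z0; rewrite /PP horner_sum mulr_sumr; apply: eq_bigr => k _.
rewrite hornerZ hornerXn mulrCA; congr (_ * _).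
have -> : (N.+1%:Z - 1 = N%:Z)%R by rewrite -addn1 PoszD addrK.
by rewrite exprnP -expfzDr // addrCA subrr addr0.
Qed.
End Main.

Lemma cB (R : realType) (x y : R) : ((x - y)%:C = x%:C - y%:C)%C.
Proof. by apply/eqP; rewrite eq_complex /= subr0 !eqxx. Qed.

Local Open Scope complex_scope.

Theorem proposition7p9 (R : realType) (n : nat)
    (y w : R[i] -> 'M[R[i]]_n) :
  tensor_cone y -> tensor_cone w ->
  (forall z : R[i], on_circle z -> xi n z = y z + w z) ->
  exists lam : R, [/\ 0 <= lam, lam <= 1,
    forall z : R[i], on_circle z -> w z = lam%:C *: xi n z
    & forall z : R[i], on_circle z -> y z = (1 - lam)%:C *: xi n z].
Proof.
move=> [_ ty py] [_ tw pw].
case: n y w ty py tw pw => [|N] y w ty py tw pw hs.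
  by exists 0; split; rewrite ?lexx ?ler01 // => z _; apply/matrixP => [[]].
pose N' : 'I_N.+1 := ord_max.
have hy : forall z, on_circle z -> y z = y z ord0 ord0 *: xi N.+1 z.
  move=> z hz; apply: (@rank1 _ _ _ _ (w z)) => //; [exact: py | exact: pw | exact: hs].
have [a ha] := ty ord0 ord0.
have [b hb] := ty ord0 N'.
have [d hd] := ty N' ord0.
have E1 : forall z, on_circle z -> z ^+ N * y z ord0 ord0 = (PP a).[z].
  by move=> z hz; rewrite ha // PP_eval // circle_neq0.
have E2 : 'X^N * PP a = PP b.
  apply/eqP; rewrite -subr_eq0; apply/eqP; apply: poly_circle0 => z hz.
  have z0 := circle_neq0 hz.
  rewrite hornerD hornerN hornerM hornerXn -E1 // -PP_eval // -hb //.
  have := congr1 (fun M : 'M[R[i]]_N.+1 => M ord0 N') (hy z hz) => /= ->.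
  rewrite !mxE /= subr0 -exprnP; ring.
have E3 : PP a = 'X^N * PP d.
  apply/eqP; rewrite -subr_eq0; apply/eqP; apply: poly_circle0 => z hz.
  have z0 := circle_neq0 hz.
  rewrite hornerD hornerN hornerM hornerXn -E1 // -PP_eval // -hd //.
  have := congr1 (fun M : 'M[R[i]]_N.+1 => M N' ord0) (hy z hz) => /= ->.
  rewrite !mxE /= sub0r -exprnN; field.
  by rewrite expf_neq0.
have a0 : forall k : 'I_(2 * N.+1).-1, (k != N :> nat) -> a k = 0.
  move=> k hk; case: (ltngtP k N) => h.
  - by rewrite -PP_coef E3 coefXnM h.
  - rewrite -PP_coef (_ : (PP a)`_k = ('X^N * PP a)`_(k + N)); last first.
      by rewrite coefXnM ltnNge leq_addl /= addnK.
    rewrite E2 PP_coef0 //.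
    lia.
  - by rewrite h eqxx in hk.
have hN : (N < (2 * N.+1).-1)%N.
  lia.
set aN := a (Ordinal hN).
have cE : forall z, on_circle z -> y z ord0 ord0 = aN.
  move=> z hz; have := E1 z hz.
  rewrite /PP horner_sum (bigD1 (Ordinal hN)) //= big1 ?addr0.
    rewrite hornerZ hornerXn [RHS]mulrC.
    by move/(mulfI (expf_neq0 N (circle_neq0 hz))).
  move=> k hk; rewrite a0 ?scale0r ?horner0 //.
have h1 : on_circle (1 : R[i]) by rewrite /on_circle normr1.
have c0 : 0 <= aN.
  rewrite -(cE 1 h1).
  have : 0 <= Q (y 1) (delta_mx ord0 ord0) (delta_mx ord0 ord0) := py 1 h1 _.
  by rewrite Qdelta.
have c1 : 0 <= 1 - aN.
  have : 0 <= Q (w 1) (delta_mx ord0 ord0) (delta_mx ord0 ord0) := pw 1 h1 _.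
  rewrite Qdelta -(cE 1 h1).
  have -> : w 1 = xi N.+1 1 - y 1 by rewrite hs // addrAC subrr add0r.
  by rewrite !mxE subrr expr0z.
have lamE : (complex.Re (1 - aN))%:C = 1 - aN := RRe_real (ger0_real c1).
exists (complex.Re (1 - aN)); split.
- by rewrite -ler0c lamE.
- by rewrite -lecR lamE gerBl.
- move=> z hz.
  have -> : w z = xi N.+1 z - y z by rewrite hs // addrAC subrr add0r.
  by rewrite (hy z hz) cE // lamE scalerBl scale1r.
- move=> z hz; rewrite (hy z hz) cE // cB lamE.
  by congr (_ *: _); rewrite opprB addrC subrK.
Qed.
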